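(* Let $\{G_i\}_{i\ge1}$ be a family of connected finite simple (unweighted) graphs such that $G_i$ has $i$ vertices, and for a partition $\lambda$ let $G_\lambda=G_{\lambda_1}\cup\dots\cup G_{\lambda_{\ell(\lambda)}}$ (disjoint union), so that $\{X_{G_\lambda}\}_\lambda$ is a basis of $\Lambda$. Then for every finite simple graph $G$ with $n$ vertices, \[\sum_{\lambda\vdash n}[X_{G_\lambda}]X_G=1.\]
   Context: $\Lambda$ is the algebra of symmetric functions over $\mathbb{Q}$. $X_G=\sum_\kappa\prod_v x_{\kappa(v)}$ over proper colourings $\kappa:V(G)\to\{1,2,\dots\}$. It is known that for such a family $\{G_i\}$ the functions $X_{G_\lambda}$ form a basis of $\Lambda$. $[X_{G_\lambda}]f$ denotes the coefficient of $X_{G_\lambda}$ in the expansion of $f$ in this basis. *)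

(* Defs.v *)
From HB Require Import structures.
From mathcomp Require Import all_boot all_order all_algebra.
From mathcomp Require Import mpoly.

Set Implicit Arguments.
Unset Strict Implicit.
Unset Printing Implicit Defensive.

Import GRing.Theory.
Local Open Scope ring_scope.

(* A graph is an adjacency relation e : rel V on a finite vertex type V
   (simple = symmetric and irreflexive, imposed as hypotheses). *)

Definition proper_col (V : finType) (e : rel V) (N : nat) (k : {ffun V -> 'I_N}) : bool :=
  [forall u, forall v, e u v ==> (k u != k v)].

(* Chromatic symmetric function X_G restricted to the N variables x_0..x_{N-1}:
   sum over proper colourings k : V -> {0..N-1} of prod_v x_{k v}. *)
Definition chrom (V : finType) (e : rel V) (N : nat) : {mpoly rat[N]} :=
  \sum_(k : {ffun V -> 'I_N} | proper_col e k) \prod_(v : V) 'X_(k v).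

(* A partition of n, padded with zeros to length n:
   f 0 >= f 1 >= ... >= f (n-1) >= 0 and sum = n. *)
Definition is_partn (n : nat) (f : {ffun 'I_n -> 'I_n.+1}) : bool :=
  [forall i : 'I_n, forall j : 'I_n, (i <= j)%N ==> (f j <= f i)%N]
  && ((\sum_(i < n) (f i : nat))%N == n).

Definition npartition (n : nat) := {f : {ffun 'I_n -> 'I_n.+1} | is_partn f}.

(* Disjoint union G_lambda = G_{lambda_1} u ... u G_{lambda_l}: vertex set
   {j & 'I_(lambda_j)}, adjacency only within one component. *)
Definition union_vert (n : nat) (f : {ffun 'I_n -> 'I_n.+1}) : finType :=
  {j : 'I_n & 'I_(f j)}.

Definition union_rel (F : forall i : nat, rel 'I_i) (n : nat)
  (f : {ffun 'I_n -> 'I_n.+1}) : rel (union_vert f) :=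
  fun u v => (tag u == tag v) && F (f (tag u)) (tagged u) (tagged_as u v).

Definition XGlam (F : forall i : nat, rel 'I_i) (n : nat) (lam : npartition n) : {mpoly rat[n]} :=
  @chrom (union_vert (val lam)) (@union_rel F n (val lam)) n.

(* Main.v *)
Require Import Defs.
From HB Require Import structures.
From mathcomp Require Import all_boot all_order all_algebra.
From mathcomp Require Import mpoly.
From mathcomp Require Import ring lra zify.
Import GRing.Theory.
Local Open Scope ring_scope.
Set Implicit Arguments.
Unset Strict Implicit.
Unset Printing Implicit Defensive.
Section PowerSet.
Variables (T : finType) (R : nmodType).

Lemma sum_subU1 (A : {set T}) a (f : {set T} -> R) : a \notin A ->
  \sum_(S : {set T} | S \subset a |: A) f S =
  \sum_(S : {set T} | S \subset A) f S + \sum_(S : {set T} | S \subset A) f (a |: S).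
Proof.
move=> aA.
rewrite (bigID (fun S : {set T} => a \in S)) /= addrC; congr (_ + _).
  apply: eq_bigl => S; apply/andP/idP => [[sS aS]|sA].
    apply/subsetP => x xS; move/subsetP: sS => /(_ x xS); rewrite !inE.
    by case/orP=> // /eqP xa; rewrite -xa xS in aS.
  split; last by apply/negP => /(subsetP sA); rewrite (negbTE aA).
  by apply: (subset_trans sA); apply/subsetP => x; rewrite !inE => ->; rewrite orbT.
rewrite (reindex_onto (fun S => a |: S) (fun S => S :\ a)) /=; last first.
  by move=> S /andP[_ aS]; rewrite setD1K.
apply: eq_bigl => S; rewrite setU11 andbT.
apply/andP/idP => [[sS /eqP eS]|sA].
  apply/subsetP => x xS; have := subsetP sS x; rewrite !inE xS orbT => /(_ isT).
  case/orP=> // /eqP xa; rewrite -eS xa in xS; by rewrite !inE eqxx in xS.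
split.
  by apply/subsetP => x; rewrite !inE; case/orP=> [->//|/(subsetP sA) ->]; rewrite orbT.
apply/eqP/setP => x; rewrite !inE; case: (eqVneq x a) => //= ->.
by apply/esym/negP => /(subsetP sA); rewrite (negbTE aA).
Qed.
End PowerSet.

Lemma sum_sign_sub (T : finType) (R : pzRingType) (A : {set T}) :
  \sum_(S : {set T} | S \subset A) (-1) ^+ #|S| = (A == set0)%:R :> R.
Proof.
have [->|] := eqVneq A set0.
  rewrite (big_pred1 set0) ?cards0 ?expr0 ?eqxx //.
  by move=> S; rewrite subset0.
case/set0Pn => a aA0.
have aA : a \notin A :\ a by rewrite !inE eqxx.
have eA : A = a |: (A :\ a) by rewrite setD1K.
rewrite eA sum_subU1 //.
under [X in _ + X]eq_bigr => S sS do rewrite cardsU1 (contra (fun h => subsetP sS a h) aA) exprS.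
rewrite -big_split /= big1; last by move=> S _; rewrite mulN1r addrN.

by [].
Qed.
Section DelCon.
Variables (V L : finType).

Definition relR (r : V -> L) (S : {set V * V}) : rel V :=
  fun x y => (r x == r y) || ((x, y) \in S) || ((y, x) \in S).
Definition connR r S := [forall x, forall y, connect (relR r S) x y].
Definition Aval r (E : {set V * V}) : rat :=
  \sum_(S : {set V * V} | S \subset E) (-1) ^+ #|S| * (connR r S)%:R.
Definition ncomp (r : V -> L) := #|[set r x | x : V]|.
Definition contr (r : V -> L) (u v : V) : V -> L :=
  fun x => if r x == r v then r u else r x.

Lemma connect_eq_sub (e1 e2 : rel V) :
  subrel e1 (connect e2) -> subrel e2 (connect e1) -> connect e1 =2 connect e2.
Proof.
move=> h1 h2 x y; apply/idP/idP; first exact: connect_sub.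
exact: connect_sub.
Qed.

Lemma connR_eq r r' S : (forall x y, (r x == r y) = (r' x == r' y)) ->
  connR r S = connR r' S.
Proof.
move=> h; rewrite /connR; apply: eq_forallb => x; apply: eq_forallb => y.
by apply: eq_connect => a b; rewrite /relR h.
Qed.

Lemma connR_contr r (u v : V) S :
  connR r ((u, v) |: S) = connR (contr r u v) S.
Proof.
rewrite /connR; apply: eq_forallb => x; apply: eq_forallb => y.
set r' := contr r u v.
apply: connect_eq_sub => a b.
- rewrite {1}/relR !inE.
  case/orP => [/orP[/eqP rab|/orP[/eqP[-> ->]|abS]]|/orP[/eqP[-> ->]|baS]].
  + by apply: connect1; rewrite /relR /r' /contr rab eqxx.
  + by apply: connect1; rewrite /relR /r' /contr !eqxx; case: (r u == r v); rewrite eqxx.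
  + by apply: connect1; rewrite /relR abS orbT.
  + by apply: connect1; rewrite /relR /r' /contr !eqxx; case: (r u == r v); rewrite eqxx.
  + by apply: connect1; rewrite /relR baS !orbT.
- have req : forall x y, r x = r y -> connect (relR r ((u, v) |: S)) x y.
    by move=> x0 y0 h; apply: connect1; rewrite /relR h eqxx.
  have evu : connect (relR r ((u, v) |: S)) v u.
    by apply: connect1; rewrite /relR !inE !eqxx !orbT.
  have euv : connect (relR r ((u, v) |: S)) u v.
    by apply: connect1; rewrite /relR !inE !eqxx /= !orbT.
  rewrite {1}/relR; case/orP => [/orP[|abS]|baS]; last first.
    by apply: connect1; rewrite /relR !inE baS !orbT.
    by apply: connect1; rewrite /relR !inE abS !orbT.
  rewrite /r' /contr.
  case: (r a =P r v) => ha; case: (r b =P r v) => hb /eqP h.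
  + by apply: req; rewrite ha hb.
  + apply: connect_trans (req _ _ ha) _; apply: connect_trans evu _; exact: req.
  + apply: connect_trans (req _ _ h) _; apply: connect_trans euv _; apply: req; by rewrite hb.
  + exact: req.
Qed.

Lemma Asplit r (E : {set V * V}) (e : V * V) : e \notin E ->
  Aval r (e |: E) = Aval r E - Aval (contr r e.1 e.2) E.
Proof.
move=> eE; rewrite /Aval sum_subU1 // -sumrN; congr (_ + _).
apply: eq_bigr => S sS.
have eS : e \notin S by apply: contra eE; apply: (subsetP sS).
rewrite cardsU1 eS exprS; case: e eE eS => u v eE eS /=.
by rewrite connR_contr mulN1r mulNr.
Qed.

Lemma contr_id r u v : r u = r v -> forall x y, (contr r u v x == contr r u v y) = (r x == r y).
Proof. by move=> h x y; rewrite /contr h; case: (r x =P r v) => hx; case: (r y =P r v) => hy; rewrite ?hx ?hy ?eqxx. Qed.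

Lemma Aloop r (E : {set V * V}) (f : V * V) : f \in E -> r f.1 = r f.2 -> Aval r E = 0.
Proof.
move=> fE h; have eE : E = f |: (E :\ f) by rewrite setD1K.
rewrite eE Asplit ?inE ?eqxx //.
rewrite /Aval; under [X in _ - X]eq_bigr => S _ do rewrite (connR_eq _ (contr_id h)).
by rewrite subrr.
Qed.

Lemma ncomp_contr r u v : r u != r v -> ncomp (contr r u v) = (ncomp r).-1.
Proof.
move=> ruv; rewrite /ncomp.
have -> : [set contr r u v x | x : V] = [set r x | x : V] :\ r v.
  apply/setP => l; rewrite !inE; apply/imsetP/andP.
  - case=> x _ ->; rewrite /contr; case: (r x =P r v) => h.
      by split; [|apply/imsetP; exists u].
    by split; [apply/eqP|apply/imsetP; exists x].
  - case=> nl /imsetP[x _ lx]; exists x => //; rewrite /contr -lx.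
    by rewrite (negbTE nl).
have rv : r v \in [set r x | x : V] by apply/imsetP; exists v.
by rewrite (cardsD1 (r v) [set r x | x : V]) rv.
Qed.

Lemma contr_split r u v x y : contr r u v x = contr r u v y -> r x != r y ->
  (r x = r v /\ r y = r u) \/ (r y = r v /\ r x = r u).
Proof.
rewrite /contr; case: (r x =P r v) => h1; case: (r y =P r v) => h2.
- by rewrite h1 h2 eqxx.
- by move=> ->; left.
- by move=> <-; right.
- by move=> ->; rewrite eqxx.
Qed.

Lemma connR_back r u v (S : {set V * V}) (f : V * V) : f \in S ->
  contr r u v f.1 = contr r u v f.2 -> r f.1 != r f.2 ->
  connR (contr r u v) S -> connR r S.
Proof.
case: f => a b fS /= hc hn.
have req : forall x y, r x = r y -> connect (relR r S) x y.
  by move=> x0 y0 h; apply: connect1; rewrite /relR h eqxx.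
have eab : connect (relR r S) a b by apply: connect1; rewrite /relR fS orbT.
have eba : connect (relR r S) b a by apply: connect1; rewrite /relR fS !orbT.
have key : forall x y, (r x = r v /\ r y = r u) \/ (r y = r v /\ r x = r u) ->
    connect (relR r S) x y.
  move=> x y hxy; case: (contr_split hc hn) => [[ha hb]|[hb ha]].
  - case: hxy => [[hx hy]|[hy hx]].
    + apply: connect_trans (req x a _) _; first by rewrite ha.
      by apply: connect_trans eab _; apply: req; rewrite hb.
    + apply: connect_trans (req x b _) _; first by rewrite hb.
      by apply: connect_trans eba _; apply: req; rewrite ha.
  - case: hxy => [[hx hy]|[hy hx]].
    + apply: connect_trans (req x b _) _; first by rewrite hb.
      by apply: connect_trans eba _; apply: req; rewrite ha.
    + apply: connect_trans (req x a _) _; first by rewrite ha.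
      by apply: connect_trans eab _; apply: req; rewrite hb.
move/forallP => h; apply/forallP => x; apply/forallP => y.
have := forallP (h x) y; apply: connect_sub => x0 y0.
rewrite {1}/relR; case/orP => [/orP[/eqP hr|h0]|h0].
- have [e0|ne0] := eqVneq (r x0) (r y0); first exact: req.
  by apply: key; apply: contr_split.
- by apply: connect1; rewrite /relR h0 orbT.
- by apply: connect1; rewrite /relR h0 !orbT.
Qed.

Lemma conn_req r x y : connect (relR r set0) x y -> r x = r y.
Proof.
case/connectP => p; elim: p x => [|z p IH] x /= => [_ -> //|/andP[hxz hp] hy].
rewrite -(IH z hp hy); move: hxz; rewrite /relR !inE.
by rewrite !orbF => /eqP.
Qed.

Lemma Aempty r : Aval r set0 = (connR r set0)%:R.
Proof.
rewrite /Aval (big_pred1 set0); first by rewrite cards0 expr0 mul1r.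
by move=> S; rewrite subset0.
Qed.

Lemma Asign (E : {set V * V}) (r : V -> L) : (0 < ncomp r)%N ->
  0 <= (-1) ^+ (ncomp r).-1 * Aval r E /\
  (connR r E -> (forall f, f \in E -> r f.1 != r f.2) ->
    0 < (-1) ^+ (ncomp r).-1 * Aval r E).
Proof.
move Hk: #|E| => k; elim: k E r Hk => [|k IH] E r Hk k0.
  move/eqP: Hk; rewrite cards_eq0 => /eqP ->; rewrite Aempty.
  case cE: (connR r set0); last by split; rewrite mulr0.
  have -> : ncomp r = 1%N.
    apply/eqP; rewrite eqn_leq k0 andbT.
    have [x0 _] : exists x : V, true.
      move: k0; rewrite /ncomp card_gt0 => /set0Pn [l /imsetP[x _ _]].
      by exists x.
    rewrite /ncomp -(cards1 (r x0)); apply: subset_leq_card; apply/subsetP.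
    move=> l /imsetP[x _ ->]; rewrite inE; apply/eqP.
    by apply: conn_req; move/forallP: cE => /(_ x) /forallP /(_ x0).
  by rewrite expr0 mul1r; split => // _ _; rewrite ltr01.
have [e eE] : exists e, e \in E by apply/set0Pn; rewrite -card_gt0 Hk.
have eE' : e \notin E :\ e by rewrite !inE eqxx.
have defE : E = e |: (E :\ e) by rewrite setD1K.
have cE' : #|E :\ e| = k by move: Hk; rewrite (cardsD1 e) eE add1n => -[].
have [loop|nloop] := eqVneq (r e.1) (r e.2).
  rewrite (Aloop eE loop) mulr0; split => // _ /(_ e eE); by rewrite loop eqxx.
set r' := contr r e.1 e.2.
have nc' : ncomp r' = (ncomp r).-1 by apply: ncomp_contr.
have k2 : (1 < ncomp r)%N.
  rewrite /ncomp (cardsD1 (r e.1)) (_ : r e.1 \in _); last by apply/imsetP; exists e.1.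
  rewrite add1n ltnS card_gt0; apply/set0Pn; exists (r e.2).
  by rewrite !inE eq_sym nloop; apply/imsetP; exists e.2.
have k0' : (0 < ncomp r')%N by rewrite nc'; case: (ncomp r) k2 => [|[]].
have sgn : (-1) ^+ (ncomp r).-1 = - (-1) ^+ (ncomp r').-1 :> rat.
  by rewrite nc'; case: (ncomp r) k2 => [|[|m]] // _; rewrite /= exprS mulN1r.
have eqA : (-1) ^+ (ncomp r).-1 * Aval r E =
   (-1) ^+ (ncomp r).-1 * Aval r (E :\ e) + (-1) ^+ (ncomp r').-1 * Aval r' (E :\ e).
  by rewrite {1}defE Asplit // mulrBr [X in _ - X * _]sgn mulNr opprK.
rewrite eqA.
have [IH1 IH1'] := IH _ r cE' k0.
have [IH2 IH2'] := IH _ r' cE' k0'.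
split; first by lra.
move=> cE lf.
have cE2 : connR r' (E :\ e) by rewrite /r' -connR_contr -surjective_pairing -defE.
have [[f fE lf']|nl] : (exists2 f, f \in E :\ e & r' f.1 = r' f.2) \/
    (forall f, f \in E :\ e -> r' f.1 != r' f.2).
  case: (pickP [pred f | (f \in E :\ e) && (r' f.1 == r' f.2)]) => [f /andP[fE /eqP h]|h].
    by left; exists f.
  by right => f fE; apply/negP => hf; have := h f; rewrite /= fE hf.
  rewrite (Aloop fE lf') mulr0 addr0.
  apply: IH1'; last by move=> g gE; apply: lf; move: gE; rewrite !inE => /andP[].
  apply: (connR_back fE lf'); last exact: cE2.
  by apply: lf; move: fE; rewrite !inE => /andP[].
have := IH2' cE2 nl.
lra.
Qed.

Lemma Aneq0 (E : {set V * V}) (r : V -> L) : connR r E ->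
  (forall f, f \in E -> r f.1 != r f.2) -> Aval r E != 0.
Proof.
move=> cE lf; case: (posnP (ncomp r)) => [n0|n0].
  have V0 : forall x : V, False.
    move=> x; move: n0; rewrite /ncomp (cardsD1 (r x)) (_ : r x \in _) //.
    by apply/imsetP; exists x.
  have -> : E = set0.
    by apply/setP => [[x y]]; case: (V0 x).
  rewrite Aempty; have -> : connR r set0 by apply/forallP => x; case: (V0 x).
  by rewrite oner_eq0.
have [_ /(_ cE lf)] := Asign E n0.
by apply: contraTneq => ->; rewrite mulr0 Order.POrderTheory.ltxx.
Qed.
End DelCon.
Section Stanley.
Variable n : nat.

Definition Qs (V : finType) (s : rel V) : {mpoly rat[n]} :=
  \sum_(k : {ffun V -> 'I_n} | [forall x, forall y, s x y ==> (k x == k y)])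
     \prod_(v : V) 'X_(k v).
Definition relS (V : finType) (S : {set V * V}) : rel V := fun x y => (x, y) \in S.

Lemma sum_cond (I : finType) (P : pred I) (F : I -> {mpoly rat[n]}) :
  \sum_(i | P i) F i = \sum_i (P i)%:R *: F i.
Proof.
rewrite big_mkcond /=; apply: eq_bigr => i _.
by case: (P i); rewrite ?scale1r ?scale0r.
Qed.

Lemma stanley (V : finType) (e : rel V) :
  chrom e n = \sum_(S : {set V * V} | S \subset [set p | e p.1 p.2])
     (-1) ^+ #|S| *: Qs (relS S).
Proof.
rewrite /chrom /Qs sum_cond; apply/esym.
under eq_bigr => S _ do rewrite sum_cond scaler_sumr.
rewrite exchange_big /=; apply: eq_bigr => k _.
under eq_bigr => S _ do rewrite scalerA.
rewrite -scaler_suml; congr (_ *: _).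
set M := [set p : V * V | k p.1 == k p.2].
have h : forall S : {set V * V}, [forall x, forall y, relS S x y ==> (k x == k y)] = (S \subset M).
  move=> S; apply/forallP/subsetP => [h [x y] xyS|h x]; last first.
    by apply/forallP => y; apply/implyP => xy; have := h (x, y) xy; rewrite inE.
  by rewrite inE; have := forallP (h x) y => /implyP; apply.
under eq_bigr => S _ do rewrite h.
rewrite (bigID (fun S : {set V * V} => S \subset M)) /=.
rewrite [X in _ + X]big1 ?addr0; last by move=> S /andP[_ /negbTE ->]; rewrite mulr0.
under eq_bigr => S /andP[_ ->] do rewrite mulr1.
rewrite (eq_bigl (fun S : {set V * V} => S \subset [set p | e p.1 p.2] :&: M)); last first.
  by move=> S; rewrite subsetI.
rewrite sum_sign_sub; congr (_ %:R); congr (nat_of_bool _); symmetry.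
rewrite /proper_col; apply/idP/idP => [/forallP h1|/eqP h1]; last first.
  apply/forallP => u.
  apply/forallP => v; apply/implyP => euv; apply/negP => kuv.
  by move/setP: h1 => /(_ (u, v)); rewrite !inE /= euv kuv.
apply/eqP; apply/setP => [[u v]]; rewrite !inE /=.
  by have := forallP (h1 u) v; case: (e u v) => //= /negbTE ->.
Qed.
End Stanley.
Section Prod.
Variable n : nat.
Hypothesis n0 : (0 < n)%N.

Definition psum (m : nat) : {mpoly rat[n]} := \sum_(i < n) 'X_i ^+ m.

Lemma QB_prod (V I : finType) (b : V -> I) :
  \sum_(k : {ffun V -> 'I_n} | [forall x, forall y, (b x == b y) ==> (k x == k y)])
     \prod_(v : V) 'X_(k v)
  = \prod_(i in [set b v | v : V]) psum #|[set v | b v == i]|.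
Proof.
set im := [set b v | v : V].
pose j0 := Ordinal n0.
rewrite /psum (big_distr_big_dep j0) /=.
set pf := pfamily j0 _ _.
pose phi (g : {ffun I -> 'I_n}) : {ffun V -> 'I_n} := [ffun v => g (b v)].
have phi_inj : {in pf &, injective phi}.
  move=> g1 g2 /pfamilyP[s1 _] /pfamilyP[s2 _] h; apply/ffunP => i.
  case: (boolP (i \in im)) => [/imsetP[v _ ->]|ni].
    by have := congr1 (fun f : {ffun V -> 'I_n} => f v) h; rewrite !ffunE.
  have h1 : g1 i = j0.
    by apply/eqP; apply/negPn/negP => hi; have := subsetP s1 i; rewrite !inE hi => /(_ isT); rewrite (negbTE ni).
  have h2 : g2 i = j0.
    by apply/eqP; apply/negPn/negP => hi; have := subsetP s2 i; rewrite !inE hi => /(_ isT); rewrite (negbTE ni).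
  by rewrite h1 h2.
rewrite (eq_bigl (fun k => k \in [set phi g | g in pf])); last first.
  move=> k; apply/forallP/imsetP => [h|[g gpf ->] x].
    pose g := [ffun i => if [pick v | b v == i] is Some v then k v else j0].
    exists g.
      apply/pfamilyP; split => //.
      apply/subsetP => i; rewrite !inE /g ffunE; case: pickP => [v /eqP <- _|h0].
        by apply/imsetP; exists v.
      by rewrite eqxx.
    apply/ffunP => v; rewrite /phi !ffunE; case: pickP => [w hw|/(_ v)]; last by rewrite eqxx.
    by have := forallP (h w) v; rewrite hw => /eqP.
  by apply/forallP => y; apply/implyP => /eqP hb; rewrite /phi !ffunE hb.
rewrite big_imset //=; apply: eq_bigr => g _.
rewrite (partition_big b (fun i => i \in im)); last by move=> v _; apply/imsetP; exists v.
apply: eq_bigr => i _.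
rewrite (eq_bigl (fun v => v \in [set v | b v == i])); last by move=> v; rewrite inE.
rewrite -prodr_const; apply: eq_bigr => v; rewrite inE => /eqP <-.
by rewrite /phi ffunE.
Qed.
End Prod.
Section Part.
Variable n : nat.

Definition pp (lam : npartition n) : {mpoly rat[n]} :=
  \prod_(j < n | (val lam j : nat) != 0%N) psum n (val lam j).

Lemma ord_seq (R : Type) (idx : R) (op : Monoid.com_law idx) (s : seq nat) (G : nat -> R) :
  (size s <= n)%N ->
  \big[op/idx]_(j < n | (j < size s)%N) G (nth 0%N s j) = \big[op/idx]_(x <- s) G x.
Proof.
move=> hs; rewrite (big_nth 0%N) big_mkord.
rewrite (@big_ord_widen_cond _ _ _ _ _ (fun _ => true) (fun j => G (nth 0%N s j)) hs).
by [].
Qed.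

Lemma pos_le_sumn (s : seq nat) x : x \in s -> (x <= sumn s)%N.
Proof.
elim: s => [//|y s IH]; rewrite inE /= => /orP[/eqP ->|/IH h]; first exact: leq_addr.
exact: leq_trans h (leq_addl _ _).
Qed.

Lemma size_le_sumn (s : seq nat) : all (fun x => 0 < x)%N s -> (size s <= sumn s)%N.
Proof.
elim: s => [//|y s IH] /= /andP[y0 /IH h]; rewrite -add1n; exact: leq_add.
Qed.

Lemma mkpart_ex (sz : seq nat) : all (fun x => 0 < x)%N sz -> sumn sz = n ->
  exists lam : npartition n,
    pp lam = \prod_(x <- sz) psum n x /\
    (\sum_(j < n) (val lam j : nat) ^ 2)%N = (\sum_(x <- sz) x ^ 2)%N.
Proof.
move=> pos hsum.
set s := sort geq sz.
have ps : perm_eq s sz by rewrite perm_sort.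
have poss : all (fun x => 0 < x)%N s by rewrite (perm_all _ ps).
have ssum : sumn s = n by rewrite -hsum; apply: perm_sumn.
have hsize : (size s <= n)%N by rewrite -ssum size_le_sumn.
have hle : forall j, (nth 0%N s j <= n)%N.
  move=> j; case: (ltnP j (size s)) => hj; last by rewrite nth_default.
  by rewrite -ssum pos_le_sumn // mem_nth.
have hpos : forall j, (nth 0%N s j != 0%N) = (j < size s)%N.
  move=> j; case: (ltnP j (size s)) => hj; last by rewrite nth_default ?eqxx.
  by rewrite -lt0n; move/allP: poss; apply; rewrite mem_nth.
pose f : {ffun 'I_n -> 'I_n.+1} := [ffun j : 'I_n => inord (nth 0%N s j)].
have fE : forall j : 'I_n, (f j : nat) = nth 0%N s j by move=> j; rewrite ffunE inordK // ltnS.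
have srt : sorted geq s by apply: sort_sorted => x y; apply: leq_total.
have fp : is_partn f.
  apply/andP; split.
    apply/forallP => i; apply/forallP => j; apply/implyP => ij; rewrite !fE.
    case: (ltnP j (size s)) => hj; last by rewrite nth_default.
    have hi : (i < size s)%N by apply: leq_ltn_trans ij hj.
    have := sorted_leq_nth (leT := geq) _ _ 0%N srt; apply => //.
    - by move=> x y z /= h1 h2; apply: leq_trans h2 h1.
    - by move=> x /=.
  apply/eqP; under eq_bigr => j _ do rewrite fE.
  rewrite (bigID (fun j : 'I_n => (j < size s)%N)) /= [X in (_ + X)%N]big1 ?addn0; last first.
    by move=> j; rewrite -hpos negbK => /eqP.
  have := @ord_seq nat 0%N addn s id hsize; rewrite /= => ->.
  by rewrite -ssum sumnE.
exists (exist _ f fp); split => /=.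
  rewrite /pp /=.
  under eq_bigl => j do rewrite fE hpos.
  under eq_bigr => j _ do rewrite fE.
  rewrite (@ord_seq {mpoly rat[n]} 1 *%R s (psum n) hsize).
  by apply: perm_big.
under eq_bigr => j _ do rewrite fE.
rewrite (bigID (fun j : 'I_n => (j < size s)%N)) /= [X in (_ + X)%N]big1 ?addn0; last first.
  by move=> j; rewrite -hpos negbK => /eqP ->.
rewrite (@ord_seq nat 0%N addn s (fun x => x ^ 2)%N hsize).
by apply: perm_big.
Qed.
End Part.
Definition symr (V : finType) (s : rel V) : rel V := fun x y => s x y || s y x.
Definition Mes (V : finType) (s : rel V) : nat :=
  #|[set p : V * V | connect (symr s) p.1 p.2]|.

Lemma conn_const (V : finType) (T : eqType) (e : rel V) (f : V -> T) :
  (forall x y, e x y -> f x = f y) -> forall x y, connect e x y -> f x = f y.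
Proof.
move=> h x y /connectP [p]; elim: p x => [|z p IH] x /= => [_ -> //|/andP[hxz hp] hy].
by rewrite (h _ _ hxz) (IH z hp hy).
Qed.

Lemma fib_sum (V I : finType) (b : V -> I) :
  (\sum_(i in [set b v | v : V]) #|[set v | b v == i]|)%N = #|V|.
Proof.
rewrite -sum1_card (partition_big b (fun i => i \in [set b v | v : V])) /=; last first.
  by move=> v _; apply/imsetP; exists v.
by apply: eq_bigr => i _; rewrite sum1_card; apply: eq_card => v; rewrite !inE.
Qed.

Lemma pairs_count (V I : finType) (b : V -> I) :
  #|[set p : V * V | b p.1 == b p.2]| =
  (\sum_(i in [set b v | v : V]) #|[set v | b v == i]| ^ 2)%N.
Proof.
rewrite -sum1_card (partition_big (fun p : V * V => b p.1) (fun i => i \in [set b v | v : V])) /=; last first.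
  by move=> p _; apply/imsetP; exists p.1.
apply: eq_bigr => i _; rewrite sum1_card expnS expn1 -cardsX.
apply: eq_card => [[x y]]; rewrite unfold_in /= !inE /=.
by case: (b x =P i) => [->|_]; rewrite ?andbT ?andbF //= eq_sym.
Qed.

Lemma classes (n : nat) (n0 : (0 < n)%N) (V : finType) (s : rel V) : #|V| = n ->
  exists lam : npartition n, pp lam = Qs n s /\
    (\sum_(j < n) (val lam j : nat) ^ 2)%N = Mes s.
Proof.
move=> hV.
have csym : connect_sym (symr s) by apply: sym_connect_sym => x y; rewrite /symr orbC.
pose b x := [set y | connect (symr s) x y].
have bE : forall x y, (b x == b y) = connect (symr s) x y.
  move=> x y; apply/eqP/idP => [h|h].
    have : y \in b y by rewrite inE connect0.
    by rewrite -h inE.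
  apply/setP => z; rewrite !inE; apply/idP/idP => h2.
    by apply: connect_trans h2; rewrite csym.
  exact: connect_trans h h2.
have QE : Qs n s = \sum_(k : {ffun V -> 'I_n} | [forall x, forall y, (b x == b y) ==> (k x == k y)])
     \prod_(v : V) 'X_(k v).
  apply: eq_bigl => k; apply/forallP/forallP => h x; apply/forallP => y; apply/implyP.
    rewrite bE => hc; apply/eqP; apply: (conn_const (f := k)) hc => a a' /orP [] ha.
      by apply/eqP; exact: (implyP (forallP (h a) a') ha).
    by apply/esym/eqP; exact: (implyP (forallP (h a') a) ha).
  move=> hs; have := implyP (forallP (h x) y); apply.
  by rewrite bE; apply: connect1; rewrite /symr hs.
set im := [set b v | v : V].
set sz := [seq #|[set v | b v == C]| | C <- enum im].
have pos : all (fun x => 0 < x)%N sz.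
  apply/allP => x /mapP [C]; rewrite mem_enum => /imsetP [v _ ->] ->.
  by rewrite card_gt0; apply/set0Pn; exists v; rewrite inE.
have ssum : sumn sz = n.
  by rewrite -hV -(fib_sum b) sumnE big_map big_enum.
have [lam [h1 h2]] := mkpart_ex pos ssum.
exists lam; split.
  by rewrite h1 QE (QB_prod n0) big_map big_enum.
rewrite h2 big_map big_enum /= -pairs_count /Mes.
by apply: eq_card => p; rewrite !inE bE.
Qed.
Lemma connect_hom (A B : finType) (e : rel A) (e' : rel B) (h : A -> B) :
  (forall a b, e a b -> e' (h a) (h b)) -> forall a b, connect e a b -> connect e' (h a) (h b).
Proof.
move=> hh a b /connectP [p]; elim: p a => [|z p IH] a /= => [_ -> //|/andP[haz hp] hb].
by apply: connect_trans (connect1 (hh _ _ haz)) (IH z hp hb).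
Qed.

Local Unset Implicit Arguments.
Section Union.
Variable F : forall i : nat, rel 'I_i.
Hypothesis Firr : forall i : nat, irreflexive (F i).
Hypothesis Fconn : forall (i : nat) (x y : 'I_i), connect (F i) x y.
Variable n : nat.
Variable lam : npartition n.

Definition ff : {ffun 'I_n -> 'I_n.+1} := sval lam.
Local Notation U := (union_vert ff).
Definition EU : {set U * U} := [set p : U * U | @union_rel F n ff p.1 p.2].

Lemma cardU : #|U| = n.
Proof.
rewrite card_tagged; have /andP[_ /eqP hs] := proj2_sig lam.
transitivity (\sum_(i < n) (ff i : nat))%N; last exact: hs.
by rewrite sumnE big_map big_enum; apply: eq_bigr => j _; rewrite card_ord.
Qed.

Lemma EU_tag (x y : U) : @union_rel F n ff x y -> tag x = tag y.
Proof. by case/andP => /eqP. Qed.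

Definition Ptag (T : {set U * U}) : bool :=
  [forall x : U, forall y : U, (tag x == tag y) ==> connect (symr (relS T)) x y].

Lemma tagc (T : {set U * U}) : T \subset EU -> forall x y : U,
  connect (symr (relS T)) x y -> tag x = tag y.
Proof.
move=> sT; apply: conn_const => x y /orP [] h.
  by have := subsetP sT _ h; rewrite inE => /(EU_tag _ _).
by have := subsetP sT _ h; rewrite inE => /(EU_tag _ _) ->.
Qed.

Lemma fib_tag (j : 'I_n) : #|[set u : U | tag u == j]| = ff j.
Proof.
rewrite -[RHS](card_ord (ff j)).
have -> : [set u : U | tag u == j] = [set Tagged (fun j => 'I_(ff j)) a | a : 'I_(ff j)].
  apply/setP => u; rewrite !inE; apply/idP/imsetP => [/eqP hu|[a _ ->] //].
  by case: u hu => j' a /= hj; subst j'; exists a.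
by apply: card_imset => a b h; exact: eq_from_Tagged h.
Qed.

Lemma im_tag (j : 'I_n) : (j \in [set tag u | u : U]) = ((ff j : nat) != 0%N).
Proof.
apply/imsetP/idP => [[u _ ->]|h].
  by rewrite -lt0n; apply: leq_ltn_trans (ltn_ord (tagged u)).
have h' : (0 < ff j)%N by rewrite lt0n.
by exists (Tagged (fun j => 'I_(ff j)) (Ordinal h')).
Qed.

Lemma Q_Ptag (n0 : (0 < n)%N) (T : {set U * U}) : T \subset EU -> Ptag T ->
  Qs n (relS T) = pp lam.
Proof.
move=> sT /forallP hP.
transitivity (\sum_(k : {ffun U -> 'I_n} | [forall x, forall y, (tag x == tag y) ==> (k x == k y)])
     \prod_(v : U) ('X_(k v) : {mpoly rat[n]})).
  apply: eq_bigl => k; apply/forallP/forallP => h x; apply/forallP => y; apply/implyP.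
    move=> /eqP hxy; have := implyP (forallP (hP x) y); rewrite hxy eqxx => /(_ isT) hc.
    apply/eqP; apply: (conn_const (f := k)) hc => a a' /orP [] ha.
      by apply/eqP; exact: (implyP (forallP (h a) a') ha).
    by apply/esym/eqP; exact: (implyP (forallP (h a') a) ha).
  move=> hs; have := implyP (forallP (h x) y); apply.
  by have := subsetP sT _ hs; rewrite inE => /(EU_tag _ _) ->.
rewrite (QB_prod n0) /pp.
rewrite (eq_bigl (fun j : 'I_n => (ff j : nat) != 0%N)); last by move=> j; rewrite im_tag.
by apply: eq_bigr => j _; rewrite fib_tag.
Qed.

Lemma sumsq_tag : #|[set p : U * U | tag p.1 == tag p.2]| = (\sum_(j < n) (ff j : nat) ^ 2)%N.
Proof.
rewrite pairs_count.
rewrite (eq_bigl (fun j : 'I_n => (ff j : nat) != 0%N)); last by move=> j; rewrite im_tag.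
under eq_bigr => j _ do rewrite fib_tag.
rewrite [RHS](bigID (fun j : 'I_n => (ff j : nat) != 0%N)) /= [X in (_ + X)%N]big1 ?addn0 //.
by move=> j; rewrite negbK => /eqP ->.
Qed.

Lemma Mes_lt (T : {set U * U}) : T \subset EU -> ~~ Ptag T ->
  (Mes (relS T) < \sum_(j < n) (ff j : nat) ^ 2)%N.
Proof.
move=> sT nP; rewrite -sumsq_tag; apply: proper_card; apply/properP; split.
  by apply/subsetP => [[x y]]; rewrite !inE /= => /(tagc _ sT) ->.
move: nP; rewrite negb_forall => /existsP [x]; rewrite negb_forall => /existsP [y].
rewrite negb_imply => /andP [hxy hc]; exists (x, y); by rewrite !inE.
Qed.

Definition root (u : U) : U :=
  Tagged (fun j => 'I_(ff j)) (Ordinal (leq_ltn_trans (leq0n _) (ltn_ord (tagged u)))).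

Lemma root_eq (u v : U) : tag u = tag v -> root u = root v.
Proof.
case: u => ju au; case: v => jv av /= h; subst jv.
by rewrite /root /=; congr existT; apply: val_inj.
Qed.

Definition r0 (u : U) : option U := if u == root u then None else Some u.

Lemma Ptag_conn (T : {set U * U}) : T \subset EU -> Ptag T = connR r0 T.
Proof.
move=> sT.
have sub : forall x y, connect (symr (relS T)) x y -> connect (relR r0 T) x y.
  apply: connect_sub => x y /orP [] h; apply: connect1; rewrite /relR; move: h; rewrite /relS => ->; by rewrite ?orbT.
apply/idP/idP => [/forallP hP|/forallP hc].
  apply/forallP => x; apply/forallP => y.
  have hx : connect (symr (relS T)) x (root x).
    by have := implyP (forallP (hP x) (root x)); apply.
  have hy : connect (symr (relS T)) (root y) y.
    by have := implyP (forallP (hP (root y)) y); apply.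
  apply: connect_trans (sub _ _ hx) _; apply: connect_trans _ (sub _ _ hy).
  apply: connect1; rewrite /relR /r0.
  have -> : root (root x) = root x by apply: root_eq.
  have -> : root (root y) = root y by apply: root_eq.
  by rewrite !eqxx.
set c := symr (relS T).
have csym : connect_sym c by apply: sym_connect_sym => a b; rewrite /c /symr orbC.
have inv : forall x y, connect (relR r0 T) x y ->
    connect c x y || (connect c x (root x) && connect c y (root y)).
  move=> x y /connectP [p]; elim: p x => [|z p IH] x /= => [_ ->|/andP[hxz hp] hy].
    by rewrite connect0.
  have := IH z hp hy; move: hxz; rewrite /relR.
  case/orP => [/orP [hr|hT]|hT]; last first.
  - have cxz : connect c x z by apply: connect1; rewrite /c /symr /relS hT orbT.
    have rz : root x = root z by apply: root_eq; exact: (tagc _ sT _ _ cxz).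
    case/orP => [czy|/andP[hz hy']]; first by rewrite (connect_trans cxz czy).
    by rewrite rz (connect_trans cxz hz) hy' orbT.
  - have cxz : connect c x z by apply: connect1; rewrite /c /symr /relS hT.
    have rz : root x = root z by apply: root_eq; exact: (tagc _ sT _ _ cxz).
    case/orP => [czy|/andP[hz hy']]; first by rewrite (connect_trans cxz czy).
    by rewrite rz (connect_trans cxz hz) hy' orbT.
  move: hr; rewrite /r0; case: (eqVneq x (root x)) => hx; case: (eqVneq z (root z)) => hz //.
  + move=> _; case/orP => [czy|/andP[_ hy']]; last by rewrite -hx connect0 hy' orbT.
    have rz : root z = root y by apply: root_eq; exact: (tagc _ sT _ _ czy).
    by rewrite -hx connect0 -rz -hz (csym y z) czy orbT.
  + by move=> /eqP [<-].
have tagP : forall x y, tag x = tag y -> connect c x y.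
  move=> x y hxy; case/orP: (inv x y (forallP (hc x) y)) => // /andP [hx hy].
  by rewrite (root_eq _ _ hxy) in hx; apply: connect_trans hx _; rewrite csym.
by apply/forallP => x; apply/forallP => y; apply/implyP => /eqP /tagP.
Qed.

Lemma P_EU : Ptag EU.
Proof.
apply/forallP => -[jx ax]; apply/forallP => -[jy ay]; apply/implyP => /= /eqP h.
subst jy.
have := Fconn _ ax ay.
apply: (connect_hom (h := fun a => Tagged (fun j => 'I_(ff j)) a)) => a b hab.
by rewrite /symr /relS /EU inE /union_rel /= eqxx tagged_asE hab.
Qed.

Lemma loop_EU (g : U * U) : g \in EU -> r0 g.1 != r0 g.2.
Proof.
case: g => x y; rewrite inE /= => hxy.
have tg := EU_tag _ _ hxy.
have nxy : x != y.
  apply/eqP => exy; subst y; move: hxy; case: x tg => j a _ /=.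
  by rewrite /union_rel /= tagged_asE Firr andbF.
rewrite /r0; case: (eqVneq x (root x)) => hx; case: (eqVneq y (root y)) => hy //.
  by move: nxy; rewrite hx hy (root_eq _ _ tg) eqxx.
Qed.

Lemma Aval_EU : Aval r0 EU = \sum_(T : {set U * U} | (T \subset EU) && Ptag T) (-1) ^+ #|T|.
Proof.
rewrite /Aval big_mkcondr /=; apply: eq_bigr => T sT.
by rewrite -(Ptag_conn _ sT); case: (Ptag T); rewrite ?mulr1 ?mulr0.
Qed.

Lemma c_neq0 : Aval r0 EU != 0.
Proof.
apply: Aneq0; last exact: loop_EU.
by rewrite -Ptag_conn // P_EU.
Qed.

Lemma XG_decomp (n0 : (0 < n)%N) : XGlam F lam =
  Aval r0 EU *: pp lam +
  \sum_(T : {set U * U} | (T \subset EU) && ~~ Ptag T) (-1) ^+ #|T| *: Qs n (relS T).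
Proof.
rewrite /XGlam -/ff (stanley n (@union_rel F n ff)) -/EU.
rewrite (bigID Ptag) /=; congr (_ + _).
rewrite Aval_EU scaler_suml; apply: eq_bigr => T /andP [sT hP].
by rewrite Q_Ptag.
Qed.
End Union.
Section Final.
Variable F : forall i : nat, rel 'I_i.
Hypothesis Firr : forall i : nat, irreflexive (F i).
Hypothesis Fconn : forall (i : nat) (x y : 'I_i), connect (F i) x y.
Variable n : nat.

Definition InSpan (p : {mpoly rat[n]}) :=
  exists c : npartition n -> rat, p = \sum_(lam : npartition n) c lam *: XGlam F lam.

Lemma InSpan0 : InSpan 0.
Proof. by exists (fun _ => 0); rewrite big1 // => lam _; rewrite scale0r. Qed.

Lemma InSpanD p q : InSpan p -> InSpan q -> InSpan (p + q).
Proof.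
move=> [c1 ->] [c2 ->]; exists (fun l => c1 l + c2 l).
by rewrite -big_split; apply: eq_bigr => l _; rewrite scalerDl.
Qed.

Lemma InSpanZ a p : InSpan p -> InSpan (a *: p).
Proof.
move=> [c ->]; exists (fun l => a * c l).
by rewrite scaler_sumr; apply: eq_bigr => l _; rewrite scalerA.
Qed.

Lemma InSpanN p : InSpan p -> InSpan (- p).
Proof. by move=> h; rewrite -scaleN1r; apply: InSpanZ. Qed.

Lemma InSpan_sum (I : finType) (P : pred I) (G : I -> {mpoly rat[n]}) :
  (forall i, P i -> InSpan (G i)) -> InSpan (\sum_(i | P i) G i).
Proof.
move=> h; apply: (big_ind InSpan); [exact: InSpan0|exact: InSpanD|exact: h].
Qed.

Lemma InSpanXG lam : InSpan (XGlam F lam).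
Proof.
exists (fun l => (l == lam)%:R); rewrite (bigD1 lam) //= eqxx scale1r big1 ?addr0 //.
by move=> l /negbTE ->; rewrite scale0r.
Qed.

Lemma Qspan (n0 : (0 < n)%N) m : forall (V : finType) (s : rel V),
  (Mes s < m)%N -> #|V| = n -> InSpan (Qs n s).
Proof.
elim: m => [//|m IH] V s hm hV.
have [lam [h1 h2]] := classes n0 s hV.
have h2' : (\sum_(j < n) (ff n lam j : nat) ^ 2)%N = Mes s := h2.
rewrite -h1.
have hd := XG_decomp F n lam n0.
have c0 := c_neq0 F Firr Fconn n lam.
have -> : pp lam = (Aval (r0 n lam) (EU F n lam))^-1 *: (XGlam F lam -
   \sum_(T : {set union_vert (ff n lam) * union_vert (ff n lam)} | (T \subset EU F n lam) && ~~ Ptag n lam T)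
       (-1) ^+ #|T| *: Qs n (relS T)).
  by rewrite hd addrK scalerA mulVf // scale1r.
apply: InSpanZ; apply: InSpanD; first exact: InSpanXG.
apply: InSpanN; apply: InSpan_sum => T /andP [sT nP]; apply: InSpanZ.
apply: IH; last exact: cardU n lam.
have := Mes_lt F n lam T sT nP; rewrite h2' => h; exact: leq_trans h hm.
Qed.
End Final.
Section Coef.
Variable n : nat.
Definition m1 : 'X_{1..n} := (\sum_(i < n) mnm1 (i))%MM.

Lemma m1E j : m1 j = 1%N.
Proof.
rewrite /m1 mnm_sumE (bigD1 j) //= mnm1E eqxx big1 // => i /negbTE h.
by rewrite mnm1E h.
Qed.

Lemma monoE (V : finType) (k : {ffun V -> 'I_n}) :
  \prod_(v : V) ('X_(k v) : {mpoly rat[n]}) = 'X_[\sum_(v : V) mnm1 (k v)].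
Proof.
rewrite -(big_map (fun v => mnm1 (k v)) xpredT (fun m => 'X_[m])) mpolyX_prod.
by rewrite big_map.
Qed.

Lemma inj_mono (V : finType) (k : {ffun V -> 'I_n}) : #|V| = n ->
  ((\sum_(v : V) mnm1 (k v))%MM == m1) = injectiveb k.
Proof.
move=> hV.
have fibE : forall j, (\sum_(v : V) mnm1 (k v))%MM j = #|[set v | k v == j]|.
  move=> j; rewrite mnm_sumE -sum1_card.
  rewrite [RHS](eq_bigl (fun v => k v == j)); last by move=> v; rewrite inE.
  by rewrite [RHS]big_mkcond /=; apply: eq_bigr => v _; rewrite mnm1E; case: (k v == j).
apply/eqP/injectiveP => [h x y hxy|hinj].
  have := m1E (k x); rewrite -h fibE => /eqP /cards1P [z hz].
  have : x \in [set z] by rewrite -hz inE.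
  have : y \in [set z] by rewrite -hz inE hxy.
  by rewrite !inE => /eqP -> /eqP ->.
apply/mnmP => j; rewrite fibE m1E.
have him : [set k v | v : V] = [set: 'I_n].
  by apply/eqP; rewrite eqEcard subsetT cardsT card_ord (card_imset _ hinj) hV leqnn.
have : j \in [set k v | v : V] by rewrite him inE.
case/imsetP => x _ ->; apply/eqP/cards1P; exists x; apply/setP => y; rewrite !inE.
by apply/eqP/eqP => [/hinj|->].
Qed.

Lemma coef_chrom (V : finType) (e : rel V) : irreflexive e -> #|V| = n ->
  (chrom e n)@_m1 = (n`!)%:R.
Proof.
move=> eirr hV; rewrite /chrom raddf_sum /=.
under eq_bigr => k _ do rewrite monoE mcoeffX (inj_mono _ k hV).
transitivity (\sum_(k : {ffun V -> 'I_n} | injectiveb k) (1 : rat)).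
  rewrite [LHS]big_mkcond [RHS]big_mkcond; apply: eq_bigr => k _.
  case: (boolP (injectiveb k)) => hk /=; last by case: (proper_col e k).
  have -> : proper_col e k.
    apply/forallP => u; apply/forallP => v; apply/implyP => euv.
    apply/negP => /eqP /(injectiveP _ hk) huv; subst v.
    by rewrite eirr in euv.
  by [].
rewrite sumr_const.
have -> : #|[pred k : {ffun V -> 'I_n} | injectiveb k]| = #|[set f : {ffun V -> 'I_n} | injectiveb f]|.
  by apply: eq_card => k; rewrite !inE.
rewrite card_inj_ffuns card_ord hV -[n`!](@ffact_fact n n) // subnn fact0 muln1.
by [].
Qed.
End Coef.
Lemma chrom_empty (V : finType) (e : rel V) N : #|V| = 0%N -> chrom e N = 1.
Proof.
move=> V0.
have nov : forall v : V, False.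
  by move=> v; have := card0_eq V0 v; rewrite !inE.
have k0 : {ffun V -> 'I_N} by apply: finfun => v; case: (nov v).
rewrite /chrom (big_pred1 k0).
  by apply: big1 => v; case: (nov v).
move=> k; apply/idP/eqP => [_|->].
  by apply/ffunP => v; case: (nov v).
by apply/forallP => v; case: (nov v).
Qed.

Theorem theorem3p5
  (F : forall i : nat, rel 'I_i)
  (Fsym : forall i : nat, ssrbool.symmetric (F i))
  (Firr : forall i : nat, irreflexive (F i))
  (Fconn : forall (i : nat) (x y : 'I_i), connect (F i) x y)
  (n : nat) (e : rel 'I_n)
  (esym : ssrbool.symmetric e) (eirr : irreflexive e) :
  (exists c : npartition n -> rat,
      chrom e n = \sum_(lam : npartition n) c lam *: XGlam F lam)
  /\
  (forall c : npartition n -> rat,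
      chrom e n = \sum_(lam : npartition n) c lam *: XGlam F lam ->
      \sum_(lam : npartition n) c lam = 1).
Proof.
have irrU : forall lam : npartition n, irreflexive (@union_rel F n (val lam)).
  by move=> lam [j a]; rewrite /union_rel /= tagged_asE Firr andbF.
split.
  case: (posnP n) => [n0|n0].
    subst n.
    have hp : is_partn ([ffun i => ord0] : {ffun 'I_0 -> 'I_1}).
      by apply/andP; split; [apply/forallP => -[]|rewrite big_ord0].
    pose lam0 : npartition 0 := exist (fun f => is_true (is_partn f)) _ hp.
    exists (fun l => (l == lam0)%:R).
    rewrite (bigD1 lam0) //= eqxx scale1r big1 ?addr0; last first.
      by move=> l /negbTE ->; rewrite scale0r.
    rewrite /XGlam !chrom_empty //; first exact: (cardU 0 lam0).
    exact: card_ord 0.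
  rewrite (stanley n e).
  apply: InSpan_sum => S _; apply: InSpanZ.
  apply: (Qspan F Firr Fconn n n0 (Mes (relS S)).+1) => //.
  exact: card_ord.
move=> c hc.
have := congr1 (mcoeff (m1 n)) hc.
rewrite (coef_chrom n _ e eirr (card_ord n)) raddf_sum /=.
under eq_bigr => lam _ do rewrite mcoeffZ /XGlam (coef_chrom n _ _ (irrU lam) (cardU n lam)).
rewrite -mulr_suml => h.
have nf : (n`!)%:R != 0 :> rat by rewrite Num.Theory.pnatr_eq0 -lt0n fact_gt0.
apply: (mulIf nf); by rewrite mul1r -h.
Qed.
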